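(* For a ring $R$ with identity, the following are equivalent: (i) $R$ is left semi-hereditary (equivalently, $R\text{-Mod}$ is $1$-hereditary); (ii) for every matrix $A\in\mathbf{M}_{k\times m}(R)$ there exists a matrix $B\in\mathbf{M}_{t\times k}(R)$ (for some $t\ge1$) such that (a) for every $X\in\mathbf{M}_{1\times k}(R)$, $XA=0$ if and only if $X=YB$ for some $Y\in\mathbf{M}_{1\times t}(R)$, and (b) there exists $C\in\mathbf{M}_{k\times k}(R)$ with $BC=0$ and $CA=A$.
   Context: $R$ is left semi-hereditary if every finitely generated left ideal (equivalently, every finitely generated submodule of a finitely generated projective left module) is projective; equivalently every finitely presented left $R$-module has projective dimension $\le1$. *)

(* Defs.v *)
From HB Require Import structures.
From mathcomp Require Import all_boot all_order all_algebra.
Set Implicit Arguments. Unset Strict Implicit. Unset Printing Implicit Defensive.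
Import GRing.Theory.
Local Open Scope ring_scope.

Definition is_lin (R : pzRingType) (M N : lmodType R) (f : M -> N) : Prop :=
  forall (a : R) (x y : M), f (a *: x + y) = a *: f x + f y.

Definition lin_on (R : pzRingType) (V N : lmodType R) (S : V -> Prop)
  (g : V -> N) : Prop :=
  (forall x y, S x -> S y -> g (x + y) = g x + g y) /\
  (forall (a : R) x, S x -> g (a *: x) = a *: g x).

Definition projective_submod (R : pzRingType) (V : lmodType R) (S : V -> Prop)
  : Prop :=
  forall (M N : lmodType R) (f : M -> N), is_lin f ->
    (forall y : N, exists x : M, f x = y) ->
    forall g : V -> N, lin_on S g ->
      exists h : V -> M, lin_on S h /\ (forall x, S x -> f (h x) = g x).

Definition fg_left_ideal (R : pzRingType) (n : nat) (a : 'I_n -> R) : R -> Prop :=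
  fun x => exists r : 'I_n -> R, x = \sum_(i < n) r i * a i.

Definition left_semihereditary (R : pzRingType) : Prop :=
  forall (n : nat) (a : 'I_n -> R),
    @projective_submod R R^o (fg_left_ideal a).

(* Main.v *)
Require Import Defs.
From HB Require Import structures.
From mathcomp Require Import all_boot all_order all_algebra.
From Stdlib Require Import ClassicalEpsilon ProofIrrelevance.
Set Implicit Arguments. Unset Strict Implicit. Unset Printing Implicit Defensive.
Import GRing.Theory.
Local Open Scope ring_scope.

Definition pb (P : Prop) : bool := if excluded_middle_informative P then true else false.
Lemma pbP (P : Prop) : pb P <-> P.
Proof. by rewrite /pb; case: excluded_middle_informative. Qed.


Lemma fg0 (R : pzRingType) n (a : 'I_n -> R) : fg_left_ideal a 0.
Proof. by exists (fun=> 0); rewrite big1 // => i _; rewrite mul0r. Qed.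
Lemma fgD (R : pzRingType) n (a : 'I_n -> R) x y :
  fg_left_ideal a x -> fg_left_ideal a y -> fg_left_ideal a (x + y).
Proof. move=> [r ->] [s ->]; exists (fun i => r i + s i).
by rewrite -big_split; apply: eq_bigr => i _; rewrite mulrDl. Qed.
Lemma fgM (R : pzRingType) n (a : 'I_n -> R) c x :
  fg_left_ideal a x -> fg_left_ideal a (c * x).
Proof. move=> [r ->]; exists (fun i => c * r i).
by rewrite mulr_sumr; apply: eq_bigr => i _; rewrite mulrA. Qed.
Lemma fgN (R : pzRingType) n (a : 'I_n -> R) x :
  fg_left_ideal a x -> fg_left_ideal a (- x).
Proof. by move=> h; rewrite -mulN1r; apply: fgM. Qed.

Definition Ib (R : pzRingType) n (a : 'I_n -> R) : pred R := fun x => pb (fg_left_ideal a x).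
Definition IT (R : pzRingType) n (a : 'I_n -> R) := {x : R | Ib a x}.
HB.instance Definition _ (R : pzRingType) n (a : 'I_n -> R) := Choice.on (IT a).

Definition Izero (R : pzRingType) n (a : 'I_n -> R) : IT a := exist _ 0 (proj2 (pbP _) (fg0 a)).
Definition Iadd (R : pzRingType) n (a : 'I_n -> R) (x y : IT a) : IT a :=
  exist _ (proj1_sig x + proj1_sig y)
   (proj2 (pbP _) (fgD (proj1 (pbP _) (proj2_sig x)) (proj1 (pbP _) (proj2_sig y)))).
Definition Iopp (R : pzRingType) n (a : 'I_n -> R) (x : IT a) : IT a :=
  exist _ (- proj1_sig x) (proj2 (pbP _) (fgN (proj1 (pbP _) (proj2_sig x)))).
Definition Iscale (R : pzRingType) n (a : 'I_n -> R) (c : R) (x : IT a) : IT a :=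
  exist _ (c * proj1_sig x) (proj2 (pbP _) (fgM c (proj1 (pbP _) (proj2_sig x)))).

Lemma IT_eq (R : pzRingType) n (a : 'I_n -> R) (x y : IT a) : proj1_sig x = proj1_sig y -> x = y.
Proof. by move=> e; apply: val_inj. Qed.

Lemma IaddA (R : pzRingType) n (a : 'I_n -> R) : associative (@Iadd R n a).
Proof. by move=> x y z; apply: IT_eq; rewrite /= addrA. Qed.
Lemma IaddC (R : pzRingType) n (a : 'I_n -> R) : commutative (@Iadd R n a).
Proof. by move=> x y; apply: IT_eq; rewrite /= addrC. Qed.
Lemma Iadd0 (R : pzRingType) n (a : 'I_n -> R) : left_id (Izero a) (@Iadd R n a).
Proof. by move=> x; apply: IT_eq; rewrite /= add0r. Qed.
Lemma IaddN (R : pzRingType) n (a : 'I_n -> R) : left_inverse (Izero a) (@Iopp R n a) (@Iadd R n a).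
Proof. by move=> x; apply: IT_eq; rewrite /= addNr. Qed.
HB.instance Definition _ (R : pzRingType) n (a : 'I_n -> R) :=
  GRing.isZmodule.Build (IT a) (@IaddA R n a) (@IaddC R n a) (@Iadd0 R n a) (@IaddN R n a).
Lemma IsA (R : pzRingType) n (a : 'I_n -> R) c d (v : IT a) : Iscale c (Iscale d v) = Iscale (c * d) v.
Proof. by apply: IT_eq; rewrite /= mulrA. Qed.
Lemma Is1 (R : pzRingType) n (a : 'I_n -> R) : left_id 1 (@Iscale R n a).
Proof. by move=> x; apply: IT_eq; rewrite /= mul1r. Qed.
Lemma IsDr (R : pzRingType) n (a : 'I_n -> R) : right_distributive (@Iscale R n a) +%R.
Proof. by move=> c x y; apply: IT_eq; rewrite /= mulrDr. Qed.
Lemma IsDl (R : pzRingType) n (a : 'I_n -> R) (v : IT a) : {morph (@Iscale R n a)^~ v: c d / c + d}.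
Proof. by move=> c d; apply: IT_eq; rewrite /= mulrDl. Qed.
HB.instance Definition _ (R : pzRingType) n (a : 'I_n -> R) :=
  GRing.Zmodule_isLmodule.Build R (IT a) (@IsA R n a) (@Is1 R n a) (@IsDr R n a) (@IsDl R n a).

Lemma ItD (R : pzRingType) n (a : 'I_n -> R) (x y : IT a) :
  proj1_sig (x + y) = proj1_sig x + proj1_sig y.
Proof. by []. Qed.
Lemma ItZ (R : pzRingType) n (a : 'I_n -> R) c (x : IT a) :
  proj1_sig (c *: x) = c * proj1_sig x.
Proof. by []. Qed.

Lemma lin_on_sum (R : pzRingType) (V N : lmodType R) (S : V -> Prop) (g : V -> N) :
  lin_on S g -> S 0 -> (forall x y, S x -> S y -> S (x + y)) ->
  forall n (F : 'I_n -> V), (forall i, S (F i)) ->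
  S (\sum_(i < n) F i) /\ g (\sum_(i < n) F i) = \sum_(i < n) g (F i).
Proof.
move=> [gD gZ] S0 SD n F SF.
have g0 : g 0 = 0 by rewrite -(scale0r 0) gZ // scale0r.
apply: (big_ind2 (fun y z => S y /\ g y = z)) => //.
- by move=> x1 x2 y1 y2 [Sx <-] [Sy <-]; split; [apply: SD | apply: gD].
Qed.

Lemma base_case (R : pzRingType) (k : nat) (v : 'cV[R]_k) :
  left_semihereditary R ->
  exists C : 'M[R]_k, C *m v = v /\ (forall X : 'rV[R]_k, X *m v = 0 -> X *m C = 0).
Proof.
move=> Hsh.
pose a := fun i : 'I_k => v i 0.
have fX : forall X : 'rV[R]_k, Ib a ((X *m v) 0 0).
  move=> X; apply/pbP; exists (fun i => X 0 i); rewrite mxE.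
  by apply: eq_bigr => i _.
pose f := fun X : 'rV[R]_k => (exist _ ((X *m v) 0 0) (fX X) : IT a).
have flin : is_lin f.
  move=> c X Y; apply: IT_eq => /=.
  by rewrite mulmxDl -scalemxAl !mxE.
have fsurj : forall y : IT a, exists x, f x = y.
  move=> [y Py]; have := proj1 (pbP _) Py => -[r ry].
  exists (\row_i r i); apply: IT_eq => /=; rewrite ry mxE.
  by apply: eq_bigr => i _; rewrite mxE.
pose g := fun x : R^o => match excluded_middle_informative (fg_left_ideal a x) with
   | left p => (exist _ x (proj2 (pbP _) p) : IT a) | right _ => 0 end.
have gE : forall x (Sx : fg_left_ideal a x), proj1_sig (g x) = x.
  by move=> x Sx; rewrite /g; case: excluded_middle_informative.
have glin : @lin_on R R^o (IT a) (fg_left_ideal a) g.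
  split.
  - move=> x y Sx Sy; apply: IT_eq; rewrite ItD !gE //; exact: fgD.
  - move=> c x Sx; apply: IT_eq; rewrite ItZ !gE //; exact: fgM.
have [h [hlin hf]] := Hsh k a _ _ f flin fsurj g glin.
have Sa : forall i, fg_left_ideal a (a i).
  move=> i; exists (fun j => (i == j)%:R).
  rewrite (bigD1 i) //= eqxx mul1r big1 ?addr0 // => j ji.
  by rewrite eq_sym (negbTE ji) mul0r.
exists (\matrix_(i, j) h (a i) 0 j); split.
  apply/matrixP => i j; rewrite (ord1 j) mxE.
  have := congr1 (@proj1_sig _ _) (hf _ (Sa i)); rewrite gE //= => E.
  rewrite -[RHS]/(a i) -E mxE; apply: eq_bigr => l _; by rewrite mxE.
move=> X Xv.
have S0 := fg0 a.
have [_ hs] := lin_on_sum hlin S0 (@fgD _ _ a) (fun i => fgM (X 0 i) (Sa i)).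
have : \sum_(i < k) (X 0 i * a i : R^o) = 0.
  by move/matrixP/(_ 0 0): Xv; rewrite !mxE.
move=> e.
have h0 : h 0 = 0 by rewrite -(scale0r (0 : R^o)) (proj2 hlin) // scale0r.
apply/matrixP => i j; rewrite !mxE (ord1 i).
transitivity ((h (\sum_(l < k) (X 0 l * a l : R^o))) 0 j); last by rewrite e h0 mxE.
rewrite hs summxE; apply: eq_bigr => l _.
by rewrite (proj2 hlin (X 0 l) (a l) (Sa l)) !mxE.
Qed.

Lemma colmul (R : pzRingType) m n p (A : 'M[R]_(m, n)) (B : 'M[R]_(n, p)) j :
  col j (A *m B) = A *m col j B.
Proof. apply/matrixP => i l; rewrite !mxE; apply: eq_bigr => s _; by rewrite !mxE. Qed.

Lemma Q_seq (R : pzRingType) (k : nat) : left_semihereditary R ->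
  forall (s : seq 'cV[R]_k), exists C : 'M[R]_k,
    (forall w, w \in s -> C *m w = w) /\
    (forall X : 'rV[R]_k, (forall w, w \in s -> X *m w = 0) -> X *m C = 0).
Proof.
move=> Hsh s; move: {2}(size s) (leqnn (size s)) => N; elim: N s => [|N IH] s.
  case: s => // _; exists 0; split => // X _; exact: mulmx0.
case: s => [|v s] Hs.
  exists 0; split => // X _; exact: mulmx0.
have [C1 [C1v C1X]] := base_case v Hsh.
pose D := 1%:M - C1.
have Dv : D *m v = 0 by rewrite /D mulmxBl mul1mx C1v subrr.
have [|C2 [C2w C2X]] := IH [seq D *m w | w <- s]; first by rewrite size_map.
exists (C1 + C2 *m D); split.
  move=> w; rewrite inE => /orP [/eqP -> | ws].
    by rewrite mulmxDl -mulmxA Dv mulmx0 addr0.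
  rewrite mulmxDl -mulmxA C2w; last by apply/mapP; exists w.
  by rewrite /D mulmxBl mul1mx addrC subrK.
move=> X HX.
have XC1 : X *m C1 = 0 by apply: C1X; apply: HX; rewrite inE eqxx.
have XC2 : X *m C2 = 0.
  apply: C2X => u /mapP [w ws ->].
  by rewrite mulmxA /D mulmxBr mulmx1 XC1 subr0; apply: HX; rewrite inE ws orbT.
by rewrite mulmxDr XC1 add0r mulmxA XC2 mul0mx.
Qed.

Lemma forward (R : pzRingType) : left_semihereditary R ->
  (forall (k m : nat) (A : 'M[R]_(k, m)), (0 < k)%N -> (0 < m)%N ->
     exists (t : nat) (B : 'M[R]_(t, k)),
       (0 < t)%N /\
       (forall X : 'rV[R]_k, X *m A = 0 <-> exists Y : 'rV[R]_t, X = Y *m B) /\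
       (exists C : 'M[R]_k, B *m C = 0 /\ C *m A = A)).
Proof.
move=> Hsh k m A k0 m0.
have [C [CA CX]] := Q_seq Hsh [seq col j A | j <- enum 'I_m].
have inS : forall j, col j A \in [seq col j A | j <- enum 'I_m].
  by move=> j; apply/mapP; exists j; rewrite ?mem_enum.
have CAA : C *m A = A.
  apply/matrixP => i j; have := CA _ (inS j); rewrite -colmul => /matrixP/(_ i 0).
  by rewrite !mxE.
have XA : forall X : 'rV[R]_k, X *m A = 0 -> X *m C = 0.
  move=> X XA0; apply: CX => w /mapP [j _ ->]; rewrite -colmul XA0.
  by apply/matrixP => i l; rewrite !mxE.
exists k, (1%:M - C); split => //; split.
  move=> X; split.
    by move=> /XA XC0; exists X; rewrite mulmxBr mulmx1 XC0 subr0.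
  by move=> [Y ->]; rewrite -mulmxA mulmxBl mul1mx CAA subrr mulmx0.
exists C; split => //.
apply/row_matrixP => i; rewrite row_mul row0; apply: XA.
by rewrite -row_mul mulmxBl mul1mx CAA subrr row0.
Qed.

Lemma lin_of_is_lin (R : pzRingType) (M N : lmodType R) (f : M -> N) :
  is_lin f -> lin_on (fun _ => True) f.
Proof.
move=> fl.
have f0 : f 0 = 0.
  have := fl 1 0 0; rewrite !scale1r addr0 => e.
  by apply: (addrI (f 0)); rewrite addr0 -e.
split.
  by move=> x y _ _; have := fl 1 x y; rewrite !scale1r.
by move=> c x _; rewrite -[c *: x]addr0 fl f0 addr0.
Qed.

Lemma sumT (R : pzRingType) (M N : lmodType R) (f : M -> N) :
  is_lin f -> forall n (F : 'I_n -> M), f (\sum_(i < n) F i) = \sum_(i < n) f (F i).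
Proof.
move=> fl n F.
by have [_ ->] := @lin_on_sum _ _ _ _ _ (lin_of_is_lin fl) I (fun _ _ _ _ => I) n F (fun=> I).
Qed.

Lemma backward (R : pzRingType) :
  (forall (k m : nat) (A : 'M[R]_(k, m)), (0 < k)%N -> (0 < m)%N ->
     exists (t : nat) (B : 'M[R]_(t, k)),
       (0 < t)%N /\
       (forall X : 'rV[R]_k, X *m A = 0 <-> exists Y : 'rV[R]_t, X = Y *m B) /\
       (exists C : 'M[R]_k, B *m C = 0 /\ C *m A = A)) ->
  left_semihereditary R.
Proof.
move=> H n a M N f fl fsurj g gl.
have [fD fZ] := lin_of_is_lin fl.
have f0 : f 0 = 0 by rewrite -(scale0r 0) fZ // scale0r.
have S0 := fg0 a.
have g0 : g 0 = 0 by rewrite -(scale0r (0 : R^o)) (proj2 gl) // scale0r.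
have Sa : forall i, fg_left_ideal a (a i).
  move=> i; exists (fun j => (i == j)%:R).
  rewrite (bigD1 i) //= eqxx mul1r big1 ?addr0 // => j ji.
  by rewrite eq_sym (negbTE ji) mul0r.
case: n a Sa S0 g0 gl => [|n] a Sa S0 g0 gl.
  exists (fun _ => 0); split; first by split => *; rewrite ?addr0 ?scaler0.
  by move=> x [r ->]; rewrite big_ord0 f0 g0.
pose A : 'M[R]_(n.+1, 1) := \col_i a i.
have [t [B [_ [HX [C [BC CA]]]]]] := H _ _ A isT isT.
have XC : forall X : 'rV[R]_n.+1, X *m A = 0 -> X *m C = 0.
  by move=> X /(proj1 (HX X)) [Y ->]; rewrite -mulmxA BC mulmx0.
pose mj := fun j => proj1_sig (constructive_indefinite_description _ (fsurj (g (a j)))).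
have mjE : forall j, f (mj j) = g (a j).
  by move=> j; rewrite /mj; case: constructive_indefinite_description.
pose psi := fun X : 'rV[R]_n.+1 => \sum_(j < n.+1) (X *m C) 0 j *: mj j.
pose phi := fun x : R => match excluded_middle_informative (exists X : 'rV[R]_n.+1, x = (X *m A) 0 0) with
  | left p => proj1_sig (constructive_indefinite_description _ p) | right _ => 0 end.
have phiE : forall x, fg_left_ideal a x -> x = (phi x *m A) 0 0.
  move=> x [r rx]; rewrite /phi; case: excluded_middle_informative => [p|np].
    by case: constructive_indefinite_description.
  exfalso; apply: np; exists (\row_i r i); rewrite rx mxE.
  by apply: eq_bigr => i _; rewrite !mxE.
have wd : forall X Y : 'rV[R]_n.+1, (X *m A) 0 0 = (Y *m A) 0 0 -> X *m C = Y *m C.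
  move=> X Y e; apply/eqP; rewrite -subr_eq0 -mulmxBl; apply/eqP; apply: XC.
  apply/matrixP => i j; rewrite (ord1 i) (ord1 j) [RHS]mxE.
  have -> : ((X - Y) *m A) 0 0 = (X *m A) 0 0 - (Y *m A) 0 0.
    by rewrite mulmxBl !mxE.
  by rewrite e subrr.
have psiD : forall X Y, psi (X + Y) = psi X + psi Y.
  move=> X Y; rewrite /psi -big_split; apply: eq_bigr => j _.
  by rewrite mulmxDl mxE scalerDl.
have psiZ : forall c X, psi (c *: X) = c *: psi X.
  move=> c X; rewrite /psi scaler_sumr; apply: eq_bigr => j _.
  by rewrite -scalemxAl mxE scalerA.
have psiC : forall X Y, X *m C = Y *m C -> psi X = psi Y.
  by move=> X Y e; rewrite /psi e.
exists (fun x => psi (phi x)); split.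
  split.
  - move=> x y Sx Sy; rewrite -psiD; apply: psiC; apply: wd.
    rewrite -phiE; last exact: fgD.
    by rewrite mulmxDl mxE -!phiE.
  - move=> c x Sx; rewrite -psiZ; apply: psiC; apply: wd.
    rewrite -phiE; last exact: fgM.
    by rewrite -scalemxAl mxE -phiE.
move=> x Sx; rewrite /psi sumT //.
have e : forall j, f ((phi x *m C) 0 j *: mj j) = g ((phi x *m C) 0 j * a j : R^o).
  by move=> j; rewrite fZ // mjE (proj2 gl).
rewrite (eq_bigr _ (fun j _ => e j)).
have [_ <-] := lin_on_sum gl S0 (@fgD _ _ a) (fun j => fgM ((phi x *m C) 0 j) (Sa j)).
apply: (f_equal g); rewrite [RHS](phiE x Sx) -CA mulmxA mxE.
apply: eq_bigr => j _; congr (_ * _); by rewrite /A mxE.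
Qed.

Theorem corollary5p6 (R : pzRingType) :
  left_semihereditary R <->
  (forall (k m : nat) (A : 'M[R]_(k, m)), (0 < k)%N -> (0 < m)%N ->
     exists (t : nat) (B : 'M[R]_(t, k)),
       (0 < t)%N /\
       (forall X : 'rV[R]_k, X *m A = 0 <-> exists Y : 'rV[R]_t, X = Y *m B) /\
       (exists C : 'M[R]_k, B *m C = 0 /\ C *m A = A)).
Proof. split; [exact: forward | exact: backward]. Qed.
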